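(* Let $n\ge 1$ and let $F$ be a finite simple graph that contains $\widehat{G}_n$ as an induced subgraph, such that the only edge of $F$ joining a vertex of $V(G_n)$ to a vertex of $V(F)\setminus V(G_n)$ is the edge $r_n y_n$. Then for every zero forcing set $P$ of $F$: (i) $|V(G_n)\cap P|\ge t_n$; (ii) if $|V(G_n)\cap P| = t_n$, then $r_n\notin P$, and in the zero forcing process of $F$ started from $P$ (for any valid order of forcing steps) the vertex $r_n$ is never forced by a vertex of $V(G_n)$.
   Context: Zero forcing: given a graph and a set $S$ of vertices initially colored black (all others white), repeatedly apply the rule: if a black vertex $v$ has exactly one white neighbor $u$, then $u$ becomes black (we say $v$ forces $u$). $S$ is a zero forcing set if eventually every vertex becomes black. $Z(G)$ is the minimum size of a zero forcing set of $G$. Subdivided $K_4$: the complete graph on 4 vertices $a,b,c,e$ with the edge $ab$ subdivided by a new vertex $s$ (so 5 vertices, edges $as, sb, ac, ae, bc, be, ce$); $s$ is called its subdivision vertex. $B_d$ ($d\ge1$) is the complete binary tree with $2^d-1$ vertices and root $r$ (for $d=1$ a single vertex; otherwise $r$ has two children that are roots of copies of $B_{d-1}$). $G_n$ ($n\ge1$): take $B_{2n-1}$ with root $r_n$, and for every leaf $\ell$ of $B_{2n-1}$ attach a new copy of the subdivided $K_4$ by identifying $\ell$ with its subdivision vertex. (So $G_1$ is the subdivided $K_4$ with $r_1$ its subdivision vertex.) $\widehat{G}_n$ is obtained from $G_n$ by adding a new vertex $y_n$ adjacent only to $r_n$. The sequence $t_n$ is defined by $t_1=2$ and $t_{n+1}=4t_n+2$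 for $n\ge1$. *)

(* Defs.v *)
From mathcomp Require Import all_boot.
Set Implicit Arguments. Unset Strict Implicit. Unset Printing Implicit Defensive.

Section ZF.
Variables (T : finType) (e : rel T).

Definition force_ok (B : {set T}) (v u : T) : bool :=
  [&& v \in B, u \notin B, e v u & [forall w, (e v w && (w != u)) ==> (w \in B)]].

(* a chronological list of forces (v, u) = "v forces u", each valid at its time *)
Fixpoint valid_forces (B : {set T}) (s : seq (T * T)) : bool :=
  if s is (v, u) :: s' then force_ok B v u && valid_forces (u |: B) s' else true.

Definition derived (B : {set T}) (s : seq (T * T)) : {set T} :=
  B :|: [set x | x \in map snd s].

Definition zero_forcing_set (P : {set T}) : Prop :=
  exists s, valid_forces P s /\ derived P s = [set: T].
End ZF.

(* d = 2n-1 is the depth of the binary tree B_d.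
   Tree vertices: 'I_(2^d - 1); index i stands for heap number i+1
   (root = 0; the children of i are 2i+1 and 2i+2).
   Leaves are the indices L-1 .. 2L-2 where L = 2^(d-1); leaf number k : 'I_L is index L-1+k.
   Gadget vertices attached to leaf k: (k, x) with x : 'I_4, x = 0,1,2,3 standing for a,b,c,e
   of the subdivided K4 whose subdivision vertex s is the leaf itself. *)
Definition tdepth (n : nat) := (2 * n - 1)%N.
Definition tsize (n : nat) := (2 ^ tdepth n - 1)%N.
Definition nleaves (n : nat) := (2 ^ (tdepth n - 1))%N.

Definition Gvert (n : nat) : finType := ('I_(tsize n) + 'I_(nleaves n) * 'I_4)%type.
(* vertices of \hat G_n : Some w for w in G_n, None = y_n *)
Definition Hvert (n : nat) : finType := option (Gvert n).

Definition tree_adj (i j : nat) : bool :=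
  [|| j == i.*2.+1, j == i.*2.+2, i == j.*2.+1 | i == j.*2.+2].

(* leaf k (index nleaves n - 1 + k) is the subdivision vertex s, adjacent to a (0) and b (1) *)
Definition leaf_gadget_adj (n : nat) (i : 'I_(tsize n)) (k : 'I_(nleaves n)) (x : 'I_4) : bool :=
  (val i == nleaves n - 1 + val k)%N && (val x < 2)%N.

(* inside a gadget: edges ac, ae, bc, be, ce, i.e. all pairs of {a,b,c,e} except ab *)
Definition gadget_adj (x x' : 'I_4) : bool :=
  (x != x') && (val x + val x' != 1)%N.

Definition Gadj (n : nat) (u v : Gvert n) : bool :=
  match u, v with
  | inl i, inl j => tree_adj i j
  | inl i, inr (k, x) => leaf_gadget_adj i k x
  | inr (k, x), inl i => leaf_gadget_adj i k x
  | inr (k, x), inr (k', x') => (k == k') && gadget_adj x x'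
  end.

(* the root r_n of B_{2n-1} (for n >= 1 this is Some (inl 0)) *)
Definition rootv (n : nat) : Hvert n := omap inl (insub 0%N : option 'I_(tsize n)).

Definition Hadj (n : nat) (u v : Hvert n) : bool :=
  match u, v with
  | Some u', Some v' => Gadj u' v'
  | Some _, None => u == rootv n
  | None, Some _ => v == rootv n
  | None, None => false
  end.

(* t_1 = 2, t_{n+1} = 4 t_n + 2; tseq k = t_{k+1} *)
Fixpoint tseq (k : nat) : nat := if k is k'.+1 then (4 * tseq k' + 2)%N else 2%N.
Definition t (n : nat) : nat := tseq n.-1.

(* Main.v *)
Require Import Defs.
From mathcomp Require Import all_boot zify.
Set Implicit Arguments. Unset Strict Implicit. Unset Printing Implicit Defensive.

Section General.
Variables (T : finType) (e : rel T).

Lemma valid_mem B s v u : valid_forces e B s -> (v, u) \in s ->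
  exists2 B' : {set T}, B \subset B' & force_ok e B' v u.
Proof.
elim: s B => [|[v' u'] s IH] B //= /andP[ok vs]; rewrite in_cons => /orP[/eqP[-> ->]|m].
  by exists B.
have [B' sB' ok'] := IH _ vs m; exists B' => //.
by apply: subset_trans sB'; apply/subsetP => x xB; rewrite in_setU xB orbT.
Qed.

Lemma valid_edge B s v u : valid_forces e B s -> (v, u) \in s -> e v u.
Proof. by move=> vs m; have [B' _ /and4P[]] := valid_mem vs m. Qed.

Lemma valid_notin B s v u : valid_forces e B s -> (v, u) \in s -> u \notin B.
Proof.
move=> vs m; have [B' sB' /and4P[_ uB' _ _]] := valid_mem vs m.
by apply: contra uB'; apply: (subsetP sB').
Qed.

Lemma valid_uniq_fst B s : valid_forces e B s -> uniq (map fst s).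
Proof.
elim: s B => [|[v u] s IH] B //= /andP[ok vs]; rewrite (IH _ vs) andbT.
apply/mapP => -[[v' u'] m /= ev]; subst v'.
have [B' sB' /and4P[_ u'B' evu' _]] := valid_mem vs m.
move: ok => /and4P[_ uB _ /forallP /(_ u')]; rewrite evu' /=.
have -> : u' != u.
  apply/eqP => eu; subst u'; move: u'B'; rewrite (subsetP sB') //.
  by rewrite in_setU in_set1 eqxx.
move=> /= u'B; move: u'B'; rewrite (subsetP sB') //.
by rewrite in_setU u'B orbT.
Qed.

Lemma forcer_unique B s v a b : valid_forces e B s -> (v, a) \in s -> (v, b) \in s -> a = b.
Proof.
move=> vs ma mb; have U := valid_uniq_fst vs.
elim: s B vs U ma mb => [|[v' u'] s IH] B //= /andP[_ vs] /andP[nm U].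
rewrite !in_cons => /orP[/eqP[ev ea]|ma] /orP[/eqP[eb ebb]|mb].
- by rewrite ea ebb.
- by move: nm; rewrite -ev (map_f fst mb).
- by move: nm; rewrite -eb (map_f fst ma).
- exact: IH vs U ma mb.
Qed.

Lemma derived_forced P s x : derived P s = [set: T] -> x \notin P ->
  exists v, (v, x) \in s.
Proof.
move=> D xP; have : x \in derived P s by rewrite D inE.
rewrite /derived in_setU (negbTE xP) /= inE => /mapP[[v u] m /= ->].
by exists v.
Qed.
End General.

Definition adj5n (i j : nat) : bool :=
  if i == 0 then (j == 1) || (j == 2)
  else if j == 0 then (i == 1) || (i == 2)
  else (i != j) && (i + j != 3).

Definition st5 := (seq bool * seq bool * bool)%type.
Definition memb (b : seq bool) (i : nat) := nth false b i.
Definition setb (b : seq bool) (j : nat) := set_nth false b j true.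

Definition prop5 (st : st5) : bool :=
  let: (b, p, w) := st in
  all id b ==> ((2 <= count id p) && ((count id p == 2) ==> ~~ memb p 0 && ~~ w)).

Definition step_ok (b : seq bool) (i j : nat) : bool :=
  [&& memb b i, ~~ memb b j, adj5n i j &
      all (fun x => (adj5n i x && (x != j)) ==> memb b x) (iota 0 5)].

Definition succs (st : st5) : seq st5 :=
  let: (b, p, w) := st in
  [seq (setb b ij.2, p, w || (ij.2 == 0)) | ij <- [seq (i, j) | i <- iota 0 5, j <- iota 0 5]
     & step_ok b ij.1 ij.2] ++ (if memb b 0 then [::] else [:: (setb b 0, p, w)]).

Fixpoint good (k : nat) (st : st5) : bool :=
  prop5 st && (if k is k'.+1 then all (good k') (succs st) else true).

Fixpoint blists (m : nat) : seq (seq bool) :=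
  if m is m'.+1 then [seq x :: l | x <- [:: false; true], l <- blists m'] else [:: [::]].

Lemma good_init : all (fun x => good 5 (x, x, false)) (blists 5).
Proof. vm_compute. reflexivity. Qed.

Lemma blists_mem m (x : seq bool) : size x = m -> x \in blists m.
Proof.
elim: m x => [|m IH] [|a x] // [sx].
apply: (@allpairs_f _ _ _ (fun y l => y :: l)); last exact: IH.
by case: a.
Qed.

Section Gadget.
Variables (T : finType) (e : rel T) (e_sym : symmetric e) (G : 'I_5 -> T).
Hypothesis Gi : injective G.
Hypothesis Gadj : forall i j : 'I_5, e (G i) (G j) = adj5n i j.
Hypothesis Gcl : forall (j : 'I_5) x, val j != 0 -> e (G j) x -> x \in codom G.

Definition alpha (B : {set T}) : seq bool := [seq G (inord i) \in B | i <- iota 0 5].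
Definition Aset (B : {set T}) : {set 'I_5} := [set i | G i \in B].

Lemma size_alpha B : size (alpha B) = 5.
Proof. by rewrite size_map size_iota. Qed.

Lemma memb_alpha B (i : 'I_5) : memb (alpha B) i = (G i \in B).
Proof.
by rewrite /memb (nth_map 0) ?size_iota ?ltn_ord // nth_iota ?ltn_ord // add0n inord_val.
Qed.

Lemma alpha_set B (j : 'I_5) : alpha (G j |: B) = setb (alpha B) j.
Proof.
apply: (@eq_from_nth _ false); first by rewrite size_set_nth !size_alpha; case: j => [[|[|[|[|[|]]]]]].
move=> i; rewrite size_alpha => ilt.
rewrite /setb nth_set_nth /=.
have := memb_alpha (G j |: B) (Ordinal ilt); have := memb_alpha B (Ordinal ilt).
rewrite /memb /= => -> ->; rewrite in_setU1 (inj_eq Gi).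
by rewrite -(inj_eq val_inj) /=; case: eqP.
Qed.

Lemma alpha_nin B u : u \notin codom G -> alpha (u |: B) = alpha B.
Proof.
move=> nu; apply: eq_map => i; rewrite in_setU1.
case: eqP => // E; by move: nu; rewrite -E codom_f.
Qed.

Lemma Aset_set B (j : 'I_5) : Aset (G j |: B) = j |: Aset B.
Proof. by apply/setP => i; rewrite !inE (inj_eq Gi). Qed.

Lemma Aset_nin B u : u \notin codom G -> Aset (u |: B) = Aset B.
Proof.
move=> nu; apply/setP => i; rewrite !inE.
case: eqP => // E; by move: nu; rewrite -E codom_f.
Qed.

Lemma count_alpha B : count id (alpha B) = #|Aset B|.
Proof.
rewrite cardE /enum_mem size_filter -enumT count_map -val_enum_ord count_map.
by apply: eq_count => i; rewrite /= inord_val inE.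
Qed.

Lemma derived_cons (B : {set T}) (v u : T) (s : seq (T * T)) : derived (u |: B) s = derived B ((v, u) :: s).
Proof. by apply/setP => x; rewrite !inE /= orbA; congr (_ || _); rewrite orbC. Qed.

Lemma alpha_all : all id (alpha [set: T]).
Proof. by apply/allP => b /mapP[i _ ->]; rewrite inE. Qed.

Lemma good_S k st : good k.+1 st = prop5 st && all (good k) (succs st).
Proof. by []. Qed.

Lemma prop5_full b p w : all id b ->
  prop5 (b, p, w) = (2 <= count id p) && ((count id p == 2) ==> ~~ memb p 0 && ~~ w).
Proof. by rewrite /prop5 => ->. Qed.

Lemma card_step (A : {set 'I_5}) (j : 'I_5) : j \notin A -> #|~: (j |: A)| < #|~: A|.
Proof.
move=> jA; have E : ~: (j |: A) = (~: A) :\ j by apply/setP => x; rewrite !inE negb_or andbC.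
by rewrite E [X in _ < X](cardsD1 j (~: A)) inE jA.
Qed.

Lemma sim s B p w k : valid_forces e B s -> good k (alpha B, p, w) -> #|~: Aset B| <= k ->
  prop5 (alpha (derived B s), p, w || has (fun q => (q.2 == G ord0) && (q.1 \in codom G)) s).
Proof.
elim: s B w k => [|[v u] s IH] B w k.
  move=> _ gd _; rewrite [has _ [::]]/= orbF.
  have pr : prop5 (alpha B, p, w) by case: k gd => [|k] /andP[].
  suff -> : derived B [::] = B :> {set T} by [].
  by apply/setP => x; rewrite !inE orbF.
move=> /andP[ok vs] gd ck; rewrite -derived_cons [has _ (_ :: _)]/=.
case: (boolP (u \in codom G)) => [/codomP[j Eu]| nu]; last first.
  have := IH (u |: B) w k vs; rewrite alpha_nin // Aset_nin // => /(_ gd ck).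
  case: (eqVneq u (G ord0)) => [E|_]; last by [].
  by move: nu; rewrite E codom_f.
subst u; move: (ok) => /and4P[vB uB evu fa].
have jA : j \notin Aset B by rewrite inE.
have ck' : #|~: Aset (G j |: B)| < #|~: Aset B|.
  by rewrite Aset_set; apply: card_step.
case: k gd ck => [|k] gd ck; first by have := leq_trans ck' ck.
move: gd; rewrite good_S => /andP[_ /allP gd].
case: (boolP (v \in codom G)) => [/codomP[i Ev]| nv].
  subst v.
  have := IH (G j |: B) (w || (val j == 0)) k vs; rewrite alpha_set.
  have ck2 : #|~: Aset (G j |: B)| <= k by rewrite -ltnS; apply: leq_trans ck' ck.
  move=> /(_ _ ck2); rewrite andbT (inj_eq Gi) -(inj_eq val_inj) !orbA; apply.
  apply: gd; rewrite mem_cat; apply/orP; left.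
  apply/mapP; exists (val i, val j); last by [].
  rewrite mem_filter; apply/andP; split; last first.
    by apply: (@allpairs_f _ _ _ pair); rewrite mem_iota ltn_ord.
  rewrite /step_ok !memb_alpha vB uB -Gadj evu.
  apply/allP => x; rewrite mem_iota add0n => xl.
  have := memb_alpha B (Ordinal xl); rewrite /= => ->.
  change (adj5n i (val (Ordinal xl)) && (val (Ordinal xl) != j) ==> (G (Ordinal xl) \in B)).
  rewrite -Gadj; move: fa => /forallP /(_ (G (Ordinal xl))).
  by rewrite (inj_eq Gi) -(inj_eq val_inj).
have j0 : val j == 0.
  apply: contraT => jn; move: nv; rewrite (Gcl jn) //.
  by rewrite e_sym.
have := IH (G j |: B) w k vs; rewrite alpha_set.
have ck2 : #|~: Aset (G j |: B)| <= k by rewrite -ltnS; apply: leq_trans ck' ck.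
move=> /(_ _ ck2); rewrite andbF; apply.
apply: gd; rewrite mem_cat; apply/orP; right.
have := memb_alpha B j; rewrite (negbTE uB) (eqP j0) => ->.
by rewrite inE.
Qed.

End Gadget.

Section Claims.
Variables (T : finType) (e : rel T) (e_sym : symmetric e) (P : {set T}) (s : seq (T * T)).
Hypothesis vs : valid_forces e P s.
Hypothesis Ds : derived P s = [set: T].
Variables (U : finType) (F : U -> T).

Definition PU := [set w | F w \in P].
Definition Claim (A : {set U}) (r : U) (k : nat) : Prop :=
  k <= #|A :&: PU| /\ (#|A :&: PU| = k -> F r \notin P /\
     forall v, (v, F r) \in s -> forall w, w \in A -> v != F w).

Lemma gadget_claim (g : 'I_5 -> U) :
  injective (fun i => F (g i)) ->
  (forall i j : 'I_5, e (F (g i)) (F (g j)) = adj5n i j) ->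
  (forall (j : 'I_5) x, val j != 0 -> e (F (g j)) x -> x \in codom (fun i => F (g i))) ->
  Claim (g @: setT) (g ord0) 2.
Proof.
move=> Gi Gadj Gcl.
have := sim e_sym Gi Gadj Gcl vs (p := alpha (fun i => F (g i)) P) (w := false) (k := 5).
set G := (fun i => F (g i)).
have gd : good 5 (alpha G P, alpha G P, false).
  by have /allP := good_init; apply; apply: blists_mem; rewrite size_alpha.
have ck : #|~: Aset G P| <= 5 by apply: leq_trans (max_card _) _; rewrite card_ord.
move=> /(_ gd ck); rewrite Ds prop5_full ?alpha_all // count_alpha.
have gi : injective g by move=> x y /(congr1 F) /Gi.
rewrite /Claim; have -> : g @: setT :&: PU = g @: Aset G P.
  apply/setP => x; rewrite !inE; apply/andP/imsetP.
    by move=> [/imsetP[i _ ->] xP]; exists i; rewrite // inE.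
  by move=> [i]; rewrite inE => iP ->; split; [apply: imset_f|].
rewrite card_imset // => /andP[h2 h3]; split => // E.
have m0 : memb (alpha G P) 0 = (G ord0 \in P) := memb_alpha _ _ ord0.
move: h3; rewrite E eqxx m0 => /andP[h4 h5]; split => // v vr w /imsetP[i _ ->].
apply/eqP => Ev; move/negP: h5; apply; apply/hasP; exists (v, G ord0) => //.
by rewrite /= eqxx Ev; apply: codom_f.
Qed.

Lemma cardIU (X Y Q : {set U}) : (forall x, x \in X -> x \in Y -> False) ->
  #|(X :|: Y) :&: Q| = #|X :&: Q| + #|Y :&: Q|.
Proof.
move=> D; rewrite setIUl cardsU.
suff -> : X :&: Q :&: (Y :&: Q) = set0 by rewrite cards0 subn0.
apply/setP => x; rewrite !inE; apply/negP => /andP[/andP[xX _] /andP[xY _]]; exact: D xX xY.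
Qed.

Hypothesis Fi : injective F.

Lemma forced_by (A : {set U}) ga c k : Claim A ga k -> #|A :&: PU| = k ->
  (forall v, e v (F ga) -> (forall w, w \in A -> v != F w) -> v = F c) ->
  (F c, F ga) \in s.
Proof.
move=> [_ /(_ _)] C E B; have [nP inn] := C E.
have [v m] := derived_forced Ds nP.
by rewrite -(B v (valid_edge vs m) (inn v m)).
Qed.

Lemma pair_bound (Aa Ab : {set U}) ga gb c k : Claim Aa ga k -> Claim Ab gb k ->
  ga \in Aa -> gb \in Ab -> (forall x, x \in Aa -> x \in Ab -> False) ->
  (forall v, e v (F ga) -> (forall w, w \in Aa -> v != F w) -> v = F c) ->
  (forall v, e v (F gb) -> (forall w, w \in Ab -> v != F w) -> v = F c) ->
  2 * k + 1 <= #|Aa :&: PU| + #|Ab :&: PU|.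
Proof.
move=> Ca Cb ga_in gb_in D Ba Bb.
have [la _] := Ca; have [lb _] := Cb.
rewrite leqNgt; apply/negP => lt.
have Ea : #|Aa :&: PU| = k by lia.
have Eb : #|Ab :&: PU| = k by lia.
have ma := forced_by Ca Ea Ba; have mb := forced_by Cb Eb Bb.
have := forcer_unique vs ma mb => /Fi E; subst gb; exact: D ga_in gb_in.
Qed.

Lemma one_eq1 k a b c d z : k <= a -> k <= b -> 2 * k + 1 <= a + b -> 2 * k + 1 <= c + d ->
  z + (a + b + (c + d)) = 4 * k + 2 -> a = k \/ b = k.
Proof. lia. Qed.
Lemma one_eq2 k a b c d z : k <= c -> k <= d -> 2 * k + 1 <= a + b -> 2 * k + 1 <= c + d ->
  z + (a + b + (c + d)) = 4 * k + 2 -> c = k \/ d = k.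
Proof. lia. Qed.

Lemma combine (A1 A2 A3 A4 : {set U}) (g1 g2 g3 g4 c1 c2 r : U) k :
  Claim A1 g1 k -> Claim A2 g2 k -> Claim A3 g3 k -> Claim A4 g4 k ->
  g1 \in A1 -> g2 \in A2 -> g3 \in A3 -> g4 \in A4 ->
  (forall x, x \in A1 -> x \in A2 -> False) ->
  (forall x, x \in A3 -> x \in A4 -> False) ->
  (forall x, x \in A1 :|: A2 -> x \in A3 :|: A4 -> False) ->
  (forall x, x \in [set r; c1; c2] -> x \in A1 :|: A2 :|: (A3 :|: A4) -> False) ->
  (forall v, e v (F g1) -> (forall w, w \in A1 -> v != F w) -> v = F c1) ->
  (forall v, e v (F g2) -> (forall w, w \in A2 -> v != F w) -> v = F c1) ->
  (forall v, e v (F g3) -> (forall w, w \in A3 -> v != F w) -> v = F c2) ->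
  (forall v, e v (F g4) -> (forall w, w \in A4 -> v != F w) -> v = F c2) ->
  (forall w, w \in [set r; c1; c2] :|: (A1 :|: A2 :|: (A3 :|: A4)) ->
     e (F w) (F r) -> w = c1 \/ w = c2) ->
  Claim ([set r; c1; c2] :|: (A1 :|: A2 :|: (A3 :|: A4))) r (4 * k + 2).
Proof.
move=> C1 C2 C3 C4 i1 i2 i3 i4 D12 D34 D D0 B1 B2 B3 B4 RN.
have L12 := pair_bound C1 C2 i1 i2 D12 B1 B2.
have L34 := pair_bound C3 C4 i3 i4 D34 B3 B4.
rewrite /Claim (@cardIU _ _ PU D0) (@cardIU _ _ PU D) (@cardIU _ _ PU D12) (@cardIU _ _ PU D34).
have rin : r \in [set r; c1; c2] by rewrite !inE eqxx.
split; first by lia.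
move=> E.
have E0 : #|[set r; c1; c2] :&: PU| = 0 by lia.
have rP : F r \notin P.
  apply/negP => rP; move: E0 => /eqP; rewrite cards_eq0 => /eqP/setP/(_ r).
  by rewrite inE rin inE inE rP.
split => // v m w wA; apply/eqP => Ev.
have ev : e (F w) (F r) by rewrite -Ev; apply: (valid_edge vs m).
have rA : forall x, x \in A1 :|: A2 :|: (A3 :|: A4) -> x != r.
  by move=> x xA; apply/eqP => xr; subst x; exact: D0 rin xA.
case: (RN w wA ev) => wc; subst w; rewrite Ev in m.
- case: C1 => [l1 /(_ _)] h1; case: C2 => [l2 /(_ _)] h2.
  have [E1|E2] := one_eq1 l1 l2 L12 L34 E.
  + have := forcer_unique vs (forced_by (conj l1 h1) E1 B1) m => /Fi gr.
    by move: (rA g1); rewrite !inE i1 gr eqxx => /(_ isT).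
  + have := forcer_unique vs (forced_by (conj l2 h2) E2 B2) m => /Fi gr.
    by move: (rA g2); rewrite !inE i2 gr eqxx orbT => /(_ isT).
- case: C3 => [l3 /(_ _)] h3; case: C4 => [l4 /(_ _)] h4.
  have [E3|E4] := one_eq2 l3 l4 L12 L34 E.
  + have := forcer_unique vs (forced_by (conj l3 h3) E3 B3) m => /Fi gr.
    by move: (rA g3); rewrite !inE i3 gr eqxx !orbT => /(_ isT).
  + have := forcer_unique vs (forced_by (conj l4 h4) E4 B4) m => /Fi gr.
    by move: (rA g4); rewrite !inE i4 gr eqxx !orbT => /(_ isT).
Qed.
End Claims.

Definition par (j : nat) := j.-1./2.
Definition anc (i j : nat) : Prop := exists m, iter m par j = i.
Definition ancb (i j : nat) : bool := has (fun m => iter m par j == i) (iota 0 j.+1).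

Lemma par_le j : par j <= j - 1.
Proof. rewrite /par; case: j => [|j] //=; rewrite subn1 /=; rewrite -{2}(odd_double_half j); lia. Qed.

Lemma iter_par_le m j : iter m par j <= j - m.
Proof.
elim: m => [|m IH] /=; first by rewrite subn0.
have := par_le (iter m par j); lia.
Qed.

Lemma iter_par_big m j : j <= m -> iter m par j = 0.
Proof. by move=> h; have := iter_par_le m j; lia. Qed.

Lemma ancbP i j : reflect (anc i j) (ancb i j).
Proof.
apply: (iffP hasP) => [[m _ /eqP E]|[m E]]; first by exists m.
case: (leqP m j) => mj.
  by exists m; [rewrite mem_iota; lia | apply/eqP].
exists j; first by rewrite mem_iota; lia.
by apply/eqP; rewrite -E !iter_par_big //; lia.
Qed.

Lemma iter_le m j : iter m par j <= j.
Proof. by have := iter_par_le m j; lia. Qed.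

Lemma anc_le i j : anc i j -> i <= j.
Proof. by move=> [m <-]; apply: iter_le. Qed.

Lemma anc_refl i : anc i i.
Proof. by exists 0. Qed.

Lemma anc_trans a b c : anc a b -> anc b c -> anc a c.
Proof. by move=> [m1 E1] [m2 E2]; exists (m1 + m2); rewrite iterD E2. Qed.

Lemma anc_par j : anc (par j) j.
Proof. by exists 1. Qed.

Lemma par_child i : par i.*2.+1 = i /\ par i.*2.+2 = i.
Proof. by rewrite /par /= doubleK uphalf_double. Qed.

Lemma par_eq i j : 0 < j -> par j = i -> j = i.*2.+1 \/ j = i.*2.+2.
Proof.
rewrite /par; case: j => [|j] //= _ <-; rewrite -{1 3}(odd_double_half j).
case: (odd j) => /=; [right|left]; lia.
Qed.

Lemma anc_child i j : anc i j -> j <> i -> anc i.*2.+1 j \/ anc i.*2.+2 j.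
Proof.
elim: j {-2}j (leqnn j) => [|N IH] j jN [m E] ne.
  have j0 : j = 0 by lia.
  by subst j; case: ne; rewrite -E iter_par_big.
case: m E => [|m] E; first by case: ne.
rewrite iterSr in E.
have j0 : 0 < j by case: j jN ne E => // _; rewrite iter_par_big.
case: (eqVneq (par j) i) => [pe|pne].
  by case: (par_eq j0 pe) => ->; [left|right]; apply: anc_refl.
have pl : par j <= N by have := par_le j; lia.
case: (IH _ pl (ex_intro _ m E) (elimN eqP pne)) => h; [left|right];
  exact: anc_trans h (anc_par j).
Qed.

Lemma anc_gt i j : anc i j -> j <> i -> i.*2.+1 <= j.
Proof. by move=> a ne; case: (anc_child a ne) => /anc_le; lia. Qed.

Lemma anc_chain a b j : anc a j -> anc b j -> anc a b \/ anc b a.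
Proof.
move=> [m1 E1] [m2 E2]; case: (leqP m1 m2) => h.
  by right; exists (m2 - m1); rewrite -E1 -iterD subnK.
by left; exists (m1 - m2); rewrite -E2 -iterD subnK //; lia.
Qed.

Lemma anc_decomp i j : anc i j <-> j = i \/ anc i.*2.+1 j \/ anc i.*2.+2 j.
Proof.
split.
  move=> a; case: (eqVneq j i) => [->|ne]; first by left.
  by right; apply: anc_child a (elimN eqP ne).
case=> [->|[a|a]]; first exact: anc_refl.
  by apply: anc_trans a; rewrite -{1}(proj1 (par_child i)); apply: anc_par.
by apply: anc_trans a; rewrite -{1}(proj2 (par_child i)); apply: anc_par.
Qed.

Lemma anc_disj a b x : anc a x -> anc b x -> a <> b -> a.*2.+1 > b -> b.*2.+1 > a -> False.
Proof.
move=> ha hb ne h1 h2; case: (anc_chain ha hb) => h.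
  by have := anc_gt h (nesym ne); lia.
by have := anc_gt h ne; lia.
Qed.

Lemma anc0 j : anc 0 j.
Proof. by exists j; rewrite iter_par_big. Qed.

Definition pos n (w : Gvert n) : nat :=
  match w with inl j => nat_of_ord j | inr (k, _) => nleaves n - 1 + nat_of_ord k end.
Definition Dn n (i : nat) : {set Gvert n} := [set w | ancb i (pos w)].

Lemma nleaves_eq n : 1 <= n -> nleaves n = 4 ^ (n - 1).
Proof.
move=> hn; rewrite /nleaves /tdepth.
have -> : 2 * n - 1 - 1 = 2 * (n - 1) by lia.
by rewrite expnM.
Qed.

Lemma tsize_eq n : 1 <= n -> Defs.tsize n = 2 * nleaves n - 1.
Proof.
move=> hn; rewrite /Defs.tsize /nleaves /tdepth.
have E : 2 * n - 1 = (2 * n - 1 - 1).+1 by lia.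
by rewrite {1}E expnS.
Qed.

Section Graph.
Variables (n : nat) (hn : 1 <= n) (T : finType) (e : rel T) (e_sym : symmetric e)
  (f : Hvert n -> T) (f_inj : injective f)
  (f_ind : forall u v : Hvert n, e (f u) (f v) = Hadj u v)
  (f_cut : forall (u : Gvert n) (x : T),
      (forall w : Gvert n, x != f (Some w)) -> e (f (Some u)) x ->
      Some u = rootv n /\ x = f None).

Definition FF (w : Gvert n) : T := f (Some w).

Lemma FFi : injective FF.
Proof. by move=> x y /f_inj []. Qed.

Lemma FF_adj u v : e (FF u) (FF v) = Gadj u v.
Proof. by rewrite /FF f_ind. Qed.

Lemma rootv_eq (z : 'I_(Defs.tsize n)) : nat_of_ord z = 0 -> rootv n = Some (inl z).
Proof.
move=> z0; rewrite /rootv insubT /=; first by rewrite -z0 ltn_ord.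
by move=> h; congr (Some (inl _)); apply: val_inj.
Qed.

Lemma not_root (u : Gvert n) (z : 'I_(Defs.tsize n)) :
  (forall zz : 'I_(Defs.tsize n), u = inl zz -> nat_of_ord zz != 0) -> Some u = rootv n -> False.
Proof.
move=> h; rewrite (@rootv_eq (Ordinal (leq_ltn_trans (leq0n z) (ltn_ord z)))) //.
by case=> E; have := h _ E.
Qed.

Lemma boundary (g c : 'I_(Defs.tsize n)) : nat_of_ord g != 0 -> nat_of_ord c = par g ->
  forall v, e v (FF (inl g)) -> (forall w, w \in Dn n g -> v != FF w) -> v = FF (inl c).
Proof.
move=> g0 cp v ev nin.
case: (pickP (fun w => v == FF w)) => [w /eqP vw | none]; last first.
  have [] := f_cut (u := inl g) (x := v) (fun w => negbT (none w)).
    by rewrite e_sym.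
  move=> /not_root; case/(_ g) => // zz [<-] //.
subst v; have wn : w \notin Dn n g by apply/negP => h; move: (nin w h); rewrite eqxx.
clear nin.
move: ev; rewrite FF_adj; case: w wn => [j|[k x]] wn /=.
  rewrite /tree_adj => /or4P[] /eqP E.
  - by congr FF; congr inl; apply: val_inj; rewrite /= cp E (proj1 (par_child j)).
  - by congr FF; congr inl; apply: val_inj; rewrite /= cp E (proj2 (par_child j)).
  - by move: wn; rewrite inE /=; move/ancbP; case; exists 1; rewrite /= E (proj1 (par_child g)).
  - by move: wn; rewrite inE /=; move/ancbP; case; exists 1; rewrite /= E (proj2 (par_child g)).
rewrite /leaf_gadget_adj => /andP[/eqP E _].
by move: wn; rewrite inE /= -E; move/ancbP; case; apply: anc_refl.
Qed.

Lemma rootnb (i : 'I_(Defs.tsize n)) : nat_of_ord i < nleaves n - 1 -> forall w, w \in Dn n i ->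
  e (FF w) (FF (inl i)) -> exists j : 'I_(Defs.tsize n), w = inl j /\ (nat_of_ord j = i.*2.+1 \/ nat_of_ord j = i.*2.+2).
Proof.
move=> il w; rewrite FF_adj inE; case: w => [j|[k x]] /= /ancbP a.
  have := anc_le a; rewrite /tree_adj => ij /or4P[] /eqP E; try lia.
  - by exists j; split => //; left.
  - by exists j; split => //; right.
rewrite /leaf_gadget_adj /= => /andP[/eqP E _]; lia.
Qed.

Section Base.
Variables (P : {set T}) (s : seq (T * T)) (vs : valid_forces e P s) (Ds : derived P s = [set: T]).

Lemma base (i : 'I_(Defs.tsize n)) : nleaves n - 1 <= i -> Claim P s FF (Dn n i) (inl i) 2.
Proof.
move=> il; set L := nleaves n in il *.
have ts : Defs.tsize n = 2 * L - 1 by apply: tsize_eq.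
have iL : nat_of_ord i < 2 * L - 1 by rewrite -ts ltn_ord.
have hk : i - (L - 1) < L by lia.
set kk : 'I_L := Ordinal hk.
have hkk : L - 1 + nat_of_ord kk = i by rewrite /= subnKC.
pose g (j : 'I_5) : Gvert n := if nat_of_ord j == 0 then inl i else inr (kk, inord (nat_of_ord j).-1).
have g0 : g ord0 = inl i by [].
have ts' : forall j : 'I_(Defs.tsize n), nat_of_ord j < 2 * L - 1 by move=> j; rewrite -ts ltn_ord.
have Dg : Dn n i = g @: setT.
  apply/setP => w; rewrite inE; apply/idP/imsetP.
    move/ancbP; case: w => [j|[k x]] /= a.
      have ji : nat_of_ord j = i.
        case: (eqVneq (nat_of_ord j) (nat_of_ord i)) => // /eqP ne.
        have := anc_gt a ne; have := ts' j; lia.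
      by exists ord0 => //; rewrite g0; congr inl; apply: val_inj.
    have ki : nat_of_ord k = kk.
      case: (eqVneq (L - 1 + nat_of_ord k) (nat_of_ord i)) => [|/eqP ne]; first by rewrite /=; lia.
      have := anc_gt a ne; have := ltn_ord k; lia.
    have x5 : x.+1 < 5 by have := ltn_ord x; lia.
    exists (inord x.+1) => //; rewrite /g inordK //= inord_val.
    by congr inr; congr pair; apply: val_inj.
  move=> [j _ ->]; rewrite /g; case: ifP => _; apply/ancbP; last rewrite /= hkk; apply: anc_refl.
have Gadj5 : forall a b : 'I_5, e (FF (g a)) (FF (g b)) = adj5n a b.
  move=> a b; rewrite FF_adj.
  case: a => [[|[|[|[|[|a]]]]] Ha] //; case: b => [[|[|[|[|[|b]]]]] Hb] //;
  rewrite /g /= /leaf_gadget_adj /gadget_adj /tree_adj /=; rewrite -?(inj_eq val_inj) /= ?inordK // ?hkk ?eqxx //.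
  by rewrite /adj5n /=; apply/negP => /or4P[] /eqP; lia.
have Gi : injective (fun j => FF (g j)).
  move=> a b /FFi; rewrite /g; case: ifP => a0; case: ifP => b0 // E.
    by apply: val_inj; rewrite /= (eqP a0) (eqP b0).
  case: E => /(congr1 val); rewrite /= !inordK; try (have := ltn_ord a; have := ltn_ord b; lia).
  by move=> E; apply: val_inj => /=; move: a0 b0 E; case: (nat_of_ord a); case: (nat_of_ord b) => //= ?? _ _ ->.
have Gcl : forall (j : 'I_5) x, nat_of_ord j != 0 -> e (FF (g j)) x -> x \in codom (fun a => FF (g a)).
  move=> j x j0 ex; rewrite /g (negbTE j0) in ex.
  case: (pickP (fun w => x == FF w)) => [w /eqP xw | none]; last first.
    have [] := f_cut (u := inr (kk, inord (nat_of_ord j).-1)) (x := x) (fun w => negbT (none w)) => //.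
    move=> Er; exfalso; apply: (not_root i _ Er) => zz Ez; discriminate Ez.
  subst x; move: ex; rewrite FF_adj; case: w => [i' | [k' x']] /=.
    rewrite /leaf_gadget_adj /= => /andP[/eqP E _].
    apply/codomP; exists ord0; rewrite g0; congr FF; congr inl; apply: val_inj => /=; lia.
  move=> /andP[/eqP E _]; have x5 : x'.+1 < 5 by have := ltn_ord x'; lia.
  apply/codomP; exists (inord x'.+1); rewrite /g inordK //= inord_val.
  by congr FF; congr inr; congr pair.
have := gadget_claim e_sym vs Ds Gi Gadj5 Gcl.
by rewrite -Dg g0.
Qed.

Lemma posE (w : Gvert n) (o : 'I_(Defs.tsize n)) : o < nleaves n - 1 -> pos w = o -> w = inl o.
Proof. by case: w => [j|[k x]] /= ol E; [congr inl; apply: val_inj | lia]. Qed.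

Lemma ind h : h <= n - 1 -> forall i : 'I_(Defs.tsize n),
  4 ^ (n - 1 - h) - 1 <= i < 2 * 4 ^ (n - 1 - h) - 1 -> Claim P s FF (Dn n i) (inl i) (tseq h).
Proof.
have hL := nleaves_eq hn; have ts := tsize_eq hn.
elim: h => [|h IH] hh i /andP[lo hi].
  by apply: base; move: lo; rewrite subn0 -hL.
set q := 4 ^ (n - 1 - h.+1) in lo hi.
have q4 : 4 ^ (n - 1 - h) = 4 * q by rewrite /q -expnS; congr expn; lia.
have qL : 4 ^ (n - 1 - h) <= nleaves n by rewrite hL leq_pexp2l //; lia.
have q1 : 0 < q by rewrite expn_gt0.
rewrite q4 in qL.
have H1 : i.*2.+1 < Defs.tsize n by lia.
have H2 : i.*2.+2 < Defs.tsize n by lia.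
have H3 : (i.*2.+1).*2.+1 < Defs.tsize n by lia.
have H4 : (i.*2.+1).*2.+2 < Defs.tsize n by lia.
have H5 : (i.*2.+2).*2.+1 < Defs.tsize n by lia.
have H6 : (i.*2.+2).*2.+2 < Defs.tsize n by lia.
pose c1 := Ordinal H1; pose c2 := Ordinal H2.
pose g1 := Ordinal H3; pose g2 := Ordinal H4; pose g3 := Ordinal H5; pose g4 := Ordinal H6.
have hh' : h <= n - 1 by lia.
have rg : forall g : 'I_(Defs.tsize n), (i.*2.+1).*2.+1 <= g <= (i.*2.+2).*2.+2 ->
    Claim P s FF (Dn n g) (inl g) (tseq h).
  move=> g /andP[gl gh]; apply: IH => //; rewrite q4; apply/andP; split; lia.
have C1 := rg g1 (ltac:(rewrite /=; lia)).
have C2 := rg g2 (ltac:(rewrite /=; lia)).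
have C3 := rg g3 (ltac:(rewrite /=; lia)).
have C4 := rg g4 (ltac:(rewrite /=; lia)).
have inD : forall g : 'I_(Defs.tsize n), inl g \in Dn n g by move=> g; rewrite inE; apply/ancbP/anc_refl.
have ac1 : anc i c1 by apply/anc_decomp; right; left; apply: anc_refl.
have ac2 : anc i c2 by apply/anc_decomp; right; right; apply: anc_refl.
have ag1 : anc i g1 by apply: (anc_trans ac1); apply/anc_decomp; right; left; apply: anc_refl.
have ag2 : anc i g2 by apply: (anc_trans ac1); apply/anc_decomp; right; right; apply: anc_refl.
have ag3 : anc i g3 by apply: (anc_trans ac2); apply/anc_decomp; right; left; apply: anc_refl.
have ag4 : anc i g4 by apply: (anc_trans ac2); apply/anc_decomp; right; right; apply: anc_refl.
have Dsplit : Dn n i = [set inl i; inl c1; inl c2] :|: (Dn n g1 :|: Dn n g2 :|: (Dn n g3 :|: Dn n g4)).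
  apply/setP => w; apply/idP/idP.
    rewrite inE => /ancbP /anc_decomp [E|[/anc_decomp [E|[a|a]]|/anc_decomp [E|[a|a]]]].
    - by rewrite (posE _ E) /=; [rewrite !inE eqxx | lia].
    - by rewrite (posE (o := c1) _ E) /=; [rewrite !inE eqxx ?orbT | lia].
    - by rewrite !inE (introT (ancbP _ _) a) !orbT.
    - by rewrite !inE (introT (ancbP _ _) a) !orbT.
    - by rewrite (posE (o := c2) _ E) /=; [rewrite !inE eqxx ?orbT | lia].
    - by rewrite !inE (introT (ancbP _ _) a) !orbT.
    - by rewrite !inE (introT (ancbP _ _) a) !orbT.
  rewrite !inE => H; apply/ancbP.
  case/orP: H => [H|H].
    by case/orP: H => [/orP[]|] /eqP -> /=; [apply: anc_refl | exact: ac1 | exact: ac2].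
  case/orP: H => /orP[] /ancbP a;
    [exact: anc_trans ag1 a | exact: anc_trans ag2 a | exact: anc_trans ag3 a | exact: anc_trans ag4 a].
have D12 : forall x, x \in Dn n g1 -> x \in Dn n g2 -> False.
  by move=> x; rewrite !inE => /ancbP a /ancbP b; apply: (anc_disj a b) => /=; lia.
have D34 : forall x, x \in Dn n g3 -> x \in Dn n g4 -> False.
  by move=> x; rewrite !inE => /ancbP a /ancbP b; apply: (anc_disj a b) => /=; lia.
have D : forall x, x \in Dn n g1 :|: Dn n g2 -> x \in Dn n g3 :|: Dn n g4 -> False.
  by move=> x; rewrite !inE => /orP[] /ancbP a /orP[] /ancbP b; apply: (anc_disj a b) => /=; lia.
have D0 : forall x, x \in [set inl i; inl c1; inl c2] -> x \in Dn n g1 :|: Dn n g2 :|: (Dn n g3 :|: Dn n g4) -> False.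
  move=> x; rewrite !inE => K1 K2.
  have p1 : pos x <= i.*2.+2 by case/orP: K1 => [/orP[]|] /eqP -> /=; lia.
  have p2 : (i.*2.+1).*2.+1 <= pos x.
    by case/orP: K2 => /orP[] /ancbP /anc_le /=; lia.
  lia.
have B1 := @boundary g1 c1 (ltac:(rewrite /=; lia)) (esym (proj1 (par_child i.*2.+1))).
have B2 := @boundary g2 c1 (ltac:(rewrite /=; lia)) (esym (proj2 (par_child i.*2.+1))).
have B3 := @boundary g3 c2 (ltac:(rewrite /=; lia)) (esym (proj1 (par_child i.*2.+2))).
have B4 := @boundary g4 c2 (ltac:(rewrite /=; lia)) (esym (proj2 (par_child i.*2.+2))).
have RN : forall w, w \in [set inl i; inl c1; inl c2] :|: (Dn n g1 :|: Dn n g2 :|: (Dn n g3 :|: Dn n g4)) ->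
    e (FF w) (FF (inl i)) -> w = inl c1 \/ w = inl c2.
  rewrite -Dsplit => w wD ew.
  have [j [-> [E|E]]] := @rootnb i (ltac:(lia)) w wD ew; [left|right]; congr inl; apply: val_inj => //.
have := combine vs Ds FFi C1 C2 C3 C4 (inD g1) (inD g2) (inD g3) (inD g4) D12 D34 D D0 B1 B2 B3 B4 RN.
by rewrite -Dsplit.
Qed.
End Base.
End Graph.
Unset Implicit Arguments.

Theorem lemma1 (n : nat) (hn : (1 <= n)%N)
  (T : finType) (e : rel T) (e_sym : symmetric e) (e_irr : irreflexive e)
  (f : Hvert n -> T) (f_inj : injective f)
  (f_ind : forall u v : Hvert n, e (f u) (f v) = Hadj u v)
  (f_cut : forall (u : Gvert n) (x : T),
      (forall w : Gvert n, x != f (Some w)) -> e (f (Some u)) x ->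
      Some u = rootv n /\ x = f None)
  (P : {set T}) (hP : zero_forcing_set e P) :
  (t n <= #|P :&: [set f (Some w) | w : Gvert n]|)%N /\
  (#|P :&: [set f (Some w) | w : Gvert n]| = t n ->
     f (rootv n) \notin P /\
     forall s : seq (T * T), valid_forces e P s -> derived P s = [set: T] ->
       forall v : T, (v, f (rootv n)) \in s -> forall w : Gvert n, v != f (Some w)).
Proof.
have z0H : 0 < Defs.tsize n.
  rewrite (tsize_eq hn) (nleaves_eq hn).
  by have := expn_gt0 4 (n - 1); lia.
pose z0 := Ordinal z0H.
have rootE : rootv n = Some (inl z0) by apply: rootv_eq.
have key : forall s, valid_forces e P s -> derived P s = [set: T] ->
    Claim P s (FF f) (Dn n z0) (inl z0) (tseq (n - 1)).
  move=> s vs Ds; apply: (ind hn e_sym f_inj f_ind f_cut vs Ds (leqnn _)).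
  by rewrite subnn expn0.
have DnT : Dn n z0 = [set: Gvert n].
  by apply/setP => w; rewrite !inE; apply/ancbP; apply: anc0.
have cardE : #|P :&: [set f (Some w) | w : Gvert n]| = #|Dn n z0 :&: PU P (FF f)|.
  have SE : P :&: [set f (Some w) | w : Gvert n] = FF f @: PU P (FF f).
    apply/setP => x; rewrite !inE; apply/andP/imsetP.
      by move=> [xP /imsetP[w _ Ex]]; subst x; exists w; rewrite ?inE.
    by move=> [w wP ->]; split; [move: wP; rewrite inE | apply/imsetP; exists w].
  by rewrite SE DnT setTI (card_imset _ (FFi f_inj)).
have [s0 [vs0 Ds0]] := hP.
have tn : t n = tseq (n - 1) by rewrite /t subn1.
rewrite tn.
split; first by have [l _] := key s0 vs0 Ds0; rewrite cardE.
move=> E; rewrite cardE in E; have [_ h] := key s0 vs0 Ds0; have [rP _] := h E.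
rewrite rootE; split => // s' vs' Ds' v m w.
have [_ h'] := key s' vs' Ds'; have [_ inn] := h' E.
by apply: (inn v m w); rewrite DnT inE.
Qed.
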